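(* In the setting below, suppose there exist $K\ge 0$ and $R>0$ such that $\mathbb{P}_X(S_r)\le K\,\mathbb{P}_X(B_r)$ for all $r\in(0,R)$. If $x$ is a Lebesgue point for $\eta$ with respect to $\mathbb{P}_X$, then $\mathbb{E}[|\eta(X^x_m)-\eta(x)|]\to 0$ as $m\to\infty$, for any choice of nearest neighbors $X^x_m$ (any tie-breaking).
   Context: Let $(\mathcal{X},d)$ be a metric space with its Borel $\sigma$-algebra, let $(\Omega,\mathcal{F},\mathbb{P})$ be a probability space, and let $X,X_1,X_2,\dots$ be i.i.d. $\mathcal{X}$-valued random variables with common law $\mathbb{P}_X$. For $x\in\mathcal{X}$ and $r>0$ write $B_r=\{x':d(x,x')<r\}$, $\bar B_r=\{x':d(x,x')\le r\}$ and $S_r=\{x':d(x,x')=r\}$. The support of $\mathbb{P}_X$ is the set of $x$ such that $\mathbb{P}_X(\bar B_r(x))>0$ for all $r>0$. Fix $x$ in the support of $\mathbb{P}_X$ and a bounded measurable $\eta:\mathcal{X}\to\mathbb{R}$. For each $m\in\mathbb{N}$, a nearest neighbor of $x$ among $X_1,\dots,X_m$ is a measurable $X^x_m:\Omega\to\mathcal{X}$ with $X^x_m(\omega)\in\arg\min_{x'\in\{X_1(\omega),\dots,X_m(\omega)\}}d(x,x')$ for every $\omega\in\Omega$; fix such a sequence $(X^x_m)_{m\in\mathbb{N}}$. The point $x$ is a Lebesgue point if $\mathbb{E}[\mathbb{I}_{\bar B_r}(X)\,|\eta(X)-\eta(x)|]/\mathbb{P}_X(\bar B_r)\to 0$ as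 $r\to 0^+$. *)

(* Defs.v *)
From HB Require Import structures.
From mathcomp Require Import all_boot all_order all_algebra.
From mathcomp Require Import all_classical all_reals all_analysis.
Set Implicit Arguments. Unset Strict Implicit. Unset Printing Implicit Defensive.
Import Order.TTheory GRing.Theory Num.Theory.
Local Open Scope classical_set_scope.
Local Open Scope ring_scope.

Definition is_metric (R : realType) (T : Type) (dist : T -> T -> R) : Prop :=
  [/\ forall x y, 0 <= dist x y,
      forall x y, dist x y = 0 <-> x = y,
      forall x y, dist x y = dist y x &
      forall x y z, dist x z <= dist x y + dist y z].

Definition oball (R : realType) (T : Type) (dist : T -> T -> R) (x : T) (r : R) : set T :=
  [set y | dist x y < r].
Definition cball (R : realType) (T : Type) (dist : T -> T -> R) (x : T) (r : R) : set T :=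
  [set y | dist x y <= r].
Definition sphere (R : realType) (T : Type) (dist : T -> T -> R) (x : T) (r : R) : set T :=
  [set y | dist x y = r].

Definition metric_open (R : realType) (T : Type) (dist : T -> T -> R) (A : set T) : Prop :=
  forall x, A x -> exists2 r : R, 0 < r & oball dist x r `<=` A.

Definition borel_of_metric (R : realType) (dT : measure_display) (T : measurableType dT)
  (dist : T -> T -> R) : Prop :=
  (@measurable dT T) = <<s [set A | metric_open dist A] >>.

Definition mutually_independent_rv (R : realType) (dO : measure_display)
  (Omega : measurableType dO) (P : probability Omega R)
  (dT : measure_display) (T : measurableType dT) (Xs : nat -> Omega -> T) : Prop :=
  forall (I : seq nat) (A : nat -> set T), uniq I ->
    (forall i, i \in I -> measurable (A i)) ->
    P (\bigcap_(i in [set` I]) (Xs i @^-1` A i)) =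
    (\prod_(i <- I) P (Xs i @^-1` A i))%E.

Definition identically_distributed (R : realType) (dO : measure_display)
  (Omega : measurableType dO) (P : probability Omega R)
  (dT : measure_display) (T : measurableType dT) (Xs : nat -> Omega -> T) : Prop :=
  forall i (A : set T), measurable A -> P (Xs i @^-1` A) = P (Xs 0%N @^-1` A).

Definition in_support (R : realType) (dO : measure_display)
  (Omega : measurableType dO) (P : probability Omega R)
  (dT : measure_display) (T : measurableType dT) (dist : T -> T -> R)
  (X : Omega -> T) (x : T) : Prop :=
  forall r : R, 0 < r -> (0 < P (X @^-1` cball dist x r))%E.

Definition lebesgue_point (R : realType) (dO : measure_display)
  (Omega : measurableType dO) (P : probability Omega R)
  (dT : measure_display) (T : measurableType dT) (dist : T -> T -> R)
  (X : Omega -> T) (eta : T -> R) (x : T) : Prop :=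
  (fun r : R =>
     fine (\int[P]_w ((\1_(cball dist x r) (X w) * `|eta (X w) - eta x|)%:E))
     / fine (P (X @^-1` cball dist x r)))
    @ 0^'+ --> 0.

Definition is_nearest_neighbor (R : realType) (dO : measure_display)
  (Omega : measurableType dO) (dT : measure_display) (T : measurableType dT)
  (dist : T -> T -> R) (Xs : nat -> Omega -> T) (x : T) (m : nat)
  (NN : Omega -> T) : Prop :=
  measurable_fun setT NN /\
  forall w, (exists2 i, (1 <= i <= m)%N & NN w = Xs i w) /\
            (forall j, (1 <= j <= m)%N -> dist x (NN w) <= dist x (Xs j w)).

(* Main.v *)
Require Import Defs.
From HB Require Import structures.
From mathcomp Require Import all_boot all_order all_algebra.
From mathcomp Require Import all_classical all_reals all_analysis.
From mathcomp Require Import ring lra.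
From mathcomp Require Import measurable_realfun.
Set Implicit Arguments. Unset Strict Implicit. Unset Printing Implicit Defensive.
Import Order.TTheory GRing.Theory Num.Theory.
Local Open Scope classical_set_scope.
Local Open Scope ring_scope.
Section balls.
Context (R : realType) (dT : measure_display) (T : measurableType dT) (dist : T -> T -> R).
Hypothesis hm : is_metric dist.
Hypothesis hb : borel_of_metric dist.

Lemma oball_mopen x r : metric_open dist (oball dist x r).
Proof.
case: hm => d0 d0P dsym dtri.
move=> y /= hy; exists (r - dist x y); first by rewrite subr_gt0.
move=> z; rewrite /oball /= => hz; have := dtri x y z; lra.
Qed.

Lemma cballC_mopen x r : metric_open dist (~` cball dist x r).
Proof.
case: hm => d0 d0P dsym dtri.
move=> y; rewrite /cball /= => /negP; rewrite -ltNge => hy; exists (dist x y - r); first by rewrite subr_gt0.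
move=> z; rewrite /oball /cball /= => hz; apply/negP; rewrite -ltNge; have := dtri x z y; rewrite (dsym z y).
lra.
Qed.

Lemma oball_meas x r : measurable (oball dist x r).
Proof. rewrite hb; apply: sub_gen_smallest; exact: oball_mopen. Qed.

Lemma cball_meas x r : measurable (cball dist x r).
Proof.
rewrite -[cball _ _ _]setCK; apply: measurableC.
rewrite hb; apply: sub_gen_smallest; exact: cballC_mopen.
Qed.
End balls.

Section main.
Context (R : realType) (dO : measure_display) (Omega : measurableType dO)
  (P : probability Omega R) (dT : measure_display) (T : measurableType dT)
  (dist : T -> T -> R) (Xs : nat -> Omega -> T) (eta : T -> R) (x : T)
  (NN : nat -> Omega -> T) (M : R).
Hypothesis hm : is_metric dist.
Hypothesis hb : borel_of_metric dist.
Hypothesis hXs : forall i, measurable_fun setT (Xs i).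
Hypothesis hind : mutually_independent_rv P Xs.
Hypothesis hid : identically_distributed P Xs.
Hypothesis heta : measurable_fun setT eta.
Hypothesis hM : forall y, `|eta y| <= M.
Hypothesis hNN : forall m, (1 <= m)%N -> is_nearest_neighbor dist Xs x m (NN m).

Local Notation fx := (fun y => `|eta y - eta x|).
Local Notation hx r := (fun y => \1_(cball dist x r) y * `|eta y - eta x|).
Local Notation pc r := (P (Xs 0%N @^-1` cball dist x r)).

Lemma mpre i A : measurable A -> measurable (Xs i @^-1` A).
Proof. by move=> mA; rewrite -[_ @^-1` _]setTI; exact: hXs. Qed.

Lemma fx_meas : measurable_fun setT fx.
Proof.
apply: measurableT_comp; first exact: normr_measurable.
apply: measurable_funB => //; exact: measurable_cst.
Qed.

Lemma hx_meas r : measurable_fun setT (hx r).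
Proof.
apply: measurable_funM; last exact: fx_meas.
apply: measurable_indic; exact: cball_meas.
Qed.

Lemma M_ge0 : 0 <= M.
Proof. exact: le_trans (normr_ge0 _) (hM x). Qed.

Lemma fx_le y : fx y <= 2 * M.
Proof. have := ler_normB (eta y) (eta x); have := hM y; have := hM x; lra. Qed.

Lemma hx_ge0 r y : 0 <= hx r y.
Proof. by apply: mulr_ge0 => //; rewrite indicE; case: (_ \in _). Qed.

Lemma hx_le r y : hx r y <= 2 * M.
Proof.
rewrite /= indicE; case: (y \in _) => /=; first by rewrite mul1r fx_le.
by rewrite mul0r mulr_ge0 // M_ge0.
Qed.

Lemma G_eq r i : (\int[P]_w (hx r (Xs i w))%:E = \int[P]_w (hx r (Xs 0%N w))%:E)%E.
Proof.
have eqj j : (\int[P]_w (hx r (Xs j w))%:E =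
    \int[pushforward P (Xs j)]_y (hx r y)%:E)%E.
  rewrite (ge0_integral_pushforward (hXs j)) //= ?preimage_setT //.
  - by apply/measurable_EFinP; exact: hx_meas.
rewrite !eqj; apply: eq_measure_integral => A mA _; rewrite /pushforward; exact: hid.
Qed.


Lemma pc_fin r : pc r \is a fin_num.
Proof.
rewrite ge0_fin_numE ?measure_ge0 //.
exact: (le_lt_trans (probability_le1 _ (mpre 0 (cball_meas hm hb x r))) (ltey _)).
Qed.

Lemma hXs_meas r i : measurable_fun setT (fun w => (hx r (Xs i w))%:E).
Proof. apply/measurable_EFinP; exact: measurableT_comp (hx_meas r) (hXs i). Qed.

Lemma hXs_ge0 r i w : (0 <= (hx r (Xs i w))%:E)%E.
Proof. by rewrite lee_fin hx_ge0. Qed.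

Lemma G_ge0 r i : (0 <= \int[P]_w (hx r (Xs i w))%:E)%E.
Proof. by apply: integral_ge0 => w _; rewrite lee_fin hx_ge0. Qed.

Lemma G_le r i : (\int[P]_w (hx r (Xs i w))%:E <= (2 * M)%:E)%E.
Proof.
apply: (@le_trans _ _ (\int[P]_(w in setT) (cst (2 * M)%:E) w)%E).
  apply: ge0_le_integral => //;
  try solve [exact: hXs_meas | by move=> w _; rewrite lee_fin ?hx_ge0 ?hx_le].
rewrite integral_cst //. rewrite -[X in (_ <= X)%E]mule1; apply: lee_wpmul2l.
  by rewrite lee_fin mulr_ge0 ?M_ge0.
exact: probability_le1.
Qed.

Lemma G_fin r i : (\int[P]_w (hx r (Xs i w))%:E)%E \is a fin_num.
Proof.
rewrite ge0_fin_numE ?G_ge0 //; exact: le_lt_trans (G_le r i) (ltey _).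
Qed.

Lemma ptwise m r w : (1 <= m)%N ->
  fx (NN m w) <= 2 * M * \1_(NN m @^-1` (~` cball dist x r)) w
                 + \sum_(i <- iota 1 m) hx r (Xs i w).
Proof.
move=> m1; have [_ hw0] := hNN m1; have [[i im ei] le] := hw0 w.
have s0 : 0 <= \sum_(i <- iota 1 m) hx r (Xs i w).
  by apply: sumr_ge0 => j _; exact: hx_ge0.
rewrite indicE; case: (boolP (w \in _)) => hw.
  by rewrite mulr1; have := fx_le (NN m w); lra.
rewrite mulr0 add0r.
have iin : i \in iota 1 m by rewrite mem_iota add1n ltnS.
rewrite (bigD1_seq i) //= ?iota_uniq //.
have hc : cball dist x r (NN m w).
  apply: contrapT => nc; move/negP: hw; apply; exact: mem_set.
have -> : hx r (Xs i w) = fx (NN m w) by rewrite /= indicE -ei mem_set // mul1r.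
have : 0 <= \sum_(j <- iota 1 m | j != i) hx r (Xs j w).
  by apply: sumr_ge0 => j _; exact: hx_ge0.
lra.
Qed.

Lemma int_bound m r : (1 <= m)%N ->
  (\int[P]_w (fx (NN m w))%:E <=
    (2 * M)%:E * P (NN m @^-1` (~` cball dist x r))
    + m%:R%:E * \int[P]_w (hx r (Xs 0%N w))%:E)%E.
Proof.
move=> m1; have [mNN _] := hNN m1.
set A := NN m @^-1` (~` cball dist x r).
have mA : measurable A.
  rewrite /A -[_ @^-1` _]setTI; apply: mNN => //; apply: measurableC; exact: cball_meas.
apply: (@le_trans _ _ (\int[P]_(w in setT)
   ((2 * M * \1_A w)%:E + \sum_(i <- iota 1 m) (hx r (Xs i w))%:E))%E).
  have mS : measurable_fun setT (fun w => ((2 * M * \1_A w)%:E +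
      \sum_(i <- iota 1 m) (hx r (Xs i w))%:E)%E).
    apply: emeasurable_funD.
      apply/measurable_EFinP; apply: measurable_funM; first exact: measurable_cst.
      exact: measurable_indic.
    by apply: emeasurable_sum => i; exact: hXs_meas.
  have mF : measurable_fun setT (fun w => (fx (NN m w))%:E).
    apply/measurable_EFinP; exact: measurableT_comp fx_meas mNN.
  apply: ge0_le_integral => //;
  try solve [exact: mS | exact: mF | by move=> w _; rewrite lee_fin normr_ge0
     | by move=> w _; rewrite sumEFin -EFinD lee_fin ptwise].
have mI : measurable_fun setT (fun w => (2 * M * \1_A w)%:E).
  apply/measurable_EFinP; apply: measurable_funM; first exact: measurable_cst.
  exact: measurable_indic.
have mI0 : forall w, setT w -> (0 <= (2 * M * \1_A w)%:E)%E.
  move=> w _; rewrite lee_fin; apply: mulr_ge0; first by rewrite mulr_ge0 ?M_ge0.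
  by rewrite indicE; case: (_ \in _).
have mS : measurable_fun setT (fun w => \sum_(i <- iota 1 m) (hx r (Xs i w))%:E).
  by apply: emeasurable_sum => i; exact: hXs_meas.
have mS0 : forall w, setT w -> (0 <= \sum_(i <- iota 1 m) (hx r (Xs i w))%:E)%E.
  by move=> w _; apply: sume_ge0 => i _; rewrite lee_fin hx_ge0.
rewrite (ge0_integralD _ _ mI0 mI mS0 mS) //.
rewrite (ge0_integral_sum P measurableT (fun i => hXs_meas r i)
   (fun i w _ => hXs_ge0 r i w)).
under eq_bigr => i _ do rewrite G_eq.
under eq_integral => w _ do rewrite EFinM.
rewrite ge0_integralZl_EFin //; try solve [by rewrite mulr_ge0 ?M_ge0
  | apply/measurable_EFinP; exact: measurable_indic
  | by move=> w _; rewrite lee_fin indicE; case: (_ \in _)].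
rewrite integral_indic // setIT.
rewrite (_ : iota 1 m = index_iota 1 m.+1); last by rewrite /index_iota subn1.
rewrite -(fineK (G_fin r 0)) sumEFin sumr_const_nat subn1 /=.
by rewrite -EFinM [X in (_ <= _ + X%:E)%E]mulrC mulr_natr.
Qed.


Lemma indep_bound m r : (1 <= m)%N ->
  P (NN m @^-1` (~` cball dist x r)) = ((1 - fine (pc r)) ^+ m)%:E.
Proof.
move=> m1; have [_ hw0] := hNN m1.
have -> : NN m @^-1` (~` cball dist x r) =
    \bigcap_(i in [set` iota 1 m]) (Xs i @^-1` (~` cball dist x r)).
  apply/seteqP; split => w /=.
  - move=> hw i /=; rewrite mem_iota add1n ltnS => him hc; apply: hw.
    have [_ le] := hw0 w; exact: le_trans (le i him) hc.
  - move=> hw; have [[i im ei] _] := hw0 w; rewrite ei; apply: hw.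
    by rewrite /= mem_iota add1n ltnS.
have mC : measurable (~` cball dist x r) by apply: measurableC; exact: cball_meas.
rewrite hind; last 2 first.
- exact: iota_uniq.
- by move=> i _.
under eq_bigr => i _ do rewrite (hid i mC).
rewrite -preimage_setC probability_setC; last exact: mpre (cball_meas hm hb x r).
rewrite -(fineK (pc_fin r)) -EFinB prodEFin.
rewrite (_ : iota 1 m = index_iota 1 m.+1); last by rewrite /index_iota subn1.
by rewrite prodr_const_nat subn1.
Qed.

Lemma nat_inv_small (e : R) : 0 < e -> exists n : nat, n.+1%:R^-1 < e.
Proof. move=> e0; have := near_infty_natSinv_lt (PosNum e0); exact: filter_ex. Qed.

Lemma inv_nat_ge0 n : 0 <= (n.+1%:R : R)^-1.
Proof. by rewrite invr_ge0. Qed.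

Lemma inv_nat_gt0 n : 0 < (n.+1%:R : R)^-1.
Proof. by rewrite invr_gt0 ltr0Sn. Qed.

Lemma inv_nat_le n : (n.+2%:R : R)^-1 <= (n.+1%:R : R)^-1.
Proof. by rewrite lef_pV2 ?posrE ?ltr0Sn // ler_nat. Qed.

Lemma pc_mono r1 r2 : r1 <= r2 -> (pc r1 <= pc r2)%E.
Proof.
move=> h; apply: le_measure; try (apply: mem_set; apply: mpre; exact: cball_meas).
by move=> w; rewrite /cball /= => h1; exact: le_trans h1 h.
Qed.

Lemma quantile t d : 0 < t -> 0 <= d -> (t%:E <= pc d)%E ->
  exists r, [/\ 0 <= r, r <= d, (t%:E <= pc r)%E &
     (0 < r -> (P (Xs 0%N @^-1` oball dist x r) <= t%:E)%E)].
Proof.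
move=> t0 d0 td.
pose S := [set s | 0 <= s /\ (t%:E <= pc s)%E].
have Sd : S d by split.
have lbS : lbound S 0 by move=> s [].
have hS : has_lbound S by exists 0.
have S0 : S !=set0 by exists d.
set r := inf S.
have r0 : 0 <= r := lb_le_inf S0 lbS.
have rd : r <= d := ge_inf hS Sd.
exists r; split => //.
- pose F n := Xs 0%N @^-1` cball dist x (r + n.+1%:R^-1).
  have mF n : measurable (F n) by apply: mpre; exact: cball_meas.
  have capF : \bigcap_n F n = Xs 0%N @^-1` cball dist x r.
    apply/seteqP; split => w /=.
    + move=> hw; rewrite /cball /=; apply/ler_addgt0Pr => e e0.
      have [n hn] := nat_inv_small e0.
      have := hw n I; rewrite /F /cball /= => h; apply: (le_trans h).
      by rewrite lerD2l; exact: ltW.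
    + move=> hw n _; rewrite /F /cball /=; apply: (le_trans hw).
      by rewrite lerDl inv_nat_ge0.
  have ni : nonincreasing_seq F.
    apply/nonincreasing_seqP => n; apply/subsetPset => w; rewrite /F /cball /= => h.
    by apply: (le_trans h); rewrite lerD2l inv_nat_le.
  have mcap : measurable (\bigcap_n F n) by rewrite capF; apply: mpre; exact: cball_meas.
  have cv := nonincreasing_cvg_mu (le_lt_trans (probability_le1 P (mF 0%N)) (ltey _))
     mF mcap ni.
  rewrite capF in cv.
  apply: (@cvge_to_ge _ _ _ _ _ _ _ cv); apply: nearW => n /=.
  have [s Ss sr] := inf_adherent (inv_nat_gt0 n) (conj S0 hS).
  apply: le_trans Ss.2 _; apply: pc_mono; exact: ltW sr.
- move=> rpos.
  pose F n := Xs 0%N @^-1` cball dist x (r - n.+1%:R^-1).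
  have mF n : measurable (F n) by apply: mpre; exact: cball_meas.
  have cupF : \bigcup_n F n = Xs 0%N @^-1` oball dist x r.
    apply/seteqP; split => w /=.
    + move=> [n _]; rewrite /F /cball /oball /= => h.
      have := inv_nat_gt0 n; move: h; set i := (n.+1%:R)^-1; lra.
    + rewrite /oball /= => hw.
      have [n hn] : exists n : nat, n.+1%:R^-1 < r - dist x (Xs 0%N w).
        by apply: nat_inv_small; rewrite subr_gt0.
      exists n => //; rewrite /F /cball /=; move: hn; set i := (n.+1%:R)^-1; lra.
  have nd : nondecreasing_seq F.
    apply/nondecreasing_seqP => n; apply/subsetPset => w; rewrite /F /cball /= => h.
    by apply: (le_trans h); rewrite lerD2l lerN2 inv_nat_le.
  have mcup : measurable (\bigcup_n F n) by rewrite cupF; apply: mpre; exact: oball_meas.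
  have cv := nondecreasing_cvg_mu (mu:=P) mF mcup nd.
  rewrite cupF in cv.
  apply: (@cvge_to_le _ _ _ _ _ _ _ cv); apply: nearW => n /=.
  rewrite leNgt; apply/negP => lt.
  have := inv_nat_gt0 n => ipos.
  have [s0|s0] := leP 0 (r - n.+1%:R^-1).
    have := ge_inf hS (conj s0 (ltW lt)).
    move: ipos; set i := (n.+1%:R)^-1; lra.
  have : F n = set0.
    apply/seteqP; split => w // ; rewrite /F /cball /= => h.
    case: hm => dpos _ _ _; have := dpos x (Xs 0%N w); move: s0 h; set i := (n.+1%:R)^-1; lra.
  move=> F0; move: lt => /=; rewrite F0 measure0 lte_fin; lra.
Qed.


Lemma pfin (A : set Omega) : measurable A -> P A \is a fin_num.
Proof.
move=> mA; rewrite ge0_fin_numE ?measure_ge0 //.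
exact: (le_lt_trans (probability_le1 _ mA) (ltey _)).
Qed.

Lemma u_fin m : (1 <= m)%N -> (\int[P]_w (fx (NN m w))%:E)%E \is a fin_num.
Proof.
move=> m1; have [mNN _] := hNN m1.
have mF : measurable_fun setT (fun w => (fx (NN m w))%:E).
  apply/measurable_EFinP; exact: measurableT_comp fx_meas mNN.
rewrite ge0_fin_numE; last by apply: integral_ge0 => w _; rewrite lee_fin.
apply: le_lt_trans (ltey ((2 * M)%:E)).
apply: (@le_trans _ _ (\int[P]_(w in setT) (cst (2 * M)%:E) w)%E).
  apply: ge0_le_integral => //;
  try solve [exact: mF | by move=> w _; rewrite lee_fin ?normr_ge0 ?fx_le].
rewrite integral_cst //.
rewrite -[X in (_ <= X)%E]mule1; apply: lee_wpmul2l.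
  by rewrite lee_fin mulr_ge0 ?M_ge0.
exact: probability_le1.
Qed.

Lemma hx_zero y : hx 0 y = 0.
Proof.
rewrite /= indicE; case: (boolP (y \in cball dist x 0)) => h; last by rewrite mul0r.
have := set_mem h; rewrite /cball /= => h0.
case: hm => dpos dP _ _.
have : dist x y = 0 by apply/eqP; rewrite eq_le h0 dpos.
by move/dP => <-; rewrite subrr normr0 mulr0.
Qed.

Lemma G_zero : (\int[P]_w (hx 0 (Xs 0%N w))%:E = 0)%E.
Proof.
under eq_integral => w _ do rewrite hx_zero.
exact: integral0.
Qed.

Lemma pc_split r : fine (pc r) =
  fine (P (Xs 0%N @^-1` oball dist x r)) + fine (P (Xs 0%N @^-1` sphere dist x r)).
Proof.
have ms : measurable (sphere dist x r).
  have -> : sphere dist x r = cball dist x r `\` oball dist x r.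
    apply/seteqP; split => y; rewrite /sphere /cball /oball /=.
      by move=> ->; split => //; rewrite ltxx.
    by move=> [h1 /negP]; rewrite -leNgt => h2; apply/eqP; rewrite eq_le h1 h2.
  apply: measurableD; [exact: cball_meas | exact: oball_meas].
have -> : Xs 0%N @^-1` cball dist x r =
    Xs 0%N @^-1` oball dist x r `|` Xs 0%N @^-1` sphere dist x r.
  apply/seteqP; split => w; rewrite /sphere /cball /oball /=.
    by rewrite le_eqVlt => /orP[/eqP ->|->]; [right|left].
  by move=> [h|->]; [exact: ltW|].
rewrite measureU; first last.
- apply/seteqP; split => w //; rewrite /sphere /oball /= => -[h1 h2].
  by move: h1; rewrite h2 ltxx.
- exact: mpre.
- apply: mpre; exact: oball_meas.
rewrite fineD //; apply: pfin; apply: mpre => //; exact: oball_meas.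
Qed.

Lemma bern (t : R) m : 0 <= t -> t <= 1 -> (1 - t) ^+ m * (1 + m%:R * t) <= 1.
Proof.
move=> t0 t1; elim: m => [|m IH]; first by rewrite expr0 mul0r addr0 mulr1.
rewrite exprSr -addn1 natrD.
set a := (1 - t) ^+ m in IH *.
have a0 : 0 <= a by rewrite exprn_ge0 // subr_ge0.
have e : a * (1 - t) * (1 + (m%:R + 1) * t) =
   a * (1 + m%:R * t) - a * (t * t * (m%:R + 1)) by ring.
rewrite e.
have : 0 <= a * (t * t * (m%:R + 1)).
  by rewrite mulr_ge0 // mulr_ge0 ?mulr_ge0 // addr_ge0.
move: IH; set p := a * (1 + m%:R * t); set q := a * (t * t * (m%:R + 1)); lra.
Qed.


Lemma real_bound m r : (1 <= m)%N ->
  fine (\int[P]_w (fx (NN m w))%:E)%E <=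
  2 * M * (1 - fine (pc r)) ^+ m + m%:R * fine (\int[P]_w (hx r (Xs 0%N w))%:E)%E.
Proof.
move=> m1; rewrite -lee_fin EFinD EFinM [X in (_ + X)%E]EFinM.
rewrite fineK ?u_fin // fineK ?G_fin // -indep_bound //; exact: int_bound.
Qed.


Lemma main_sec (hsupp : in_support P dist (Xs 0%N) x)
  (K Rr : R) (K0 : 0 <= K) (Rr0 : 0 < Rr)
  (hK : forall r, 0 < r < Rr ->
     (P (Xs 0%N @^-1` sphere dist x r) <= K%:E * P (Xs 0%N @^-1` oball dist x r))%E)
  (hleb : lebesgue_point P dist (Xs 0%N) eta x) :
  ((fun m => \int[P]_w (`|eta (NN m w) - eta x|)%:E) @ \oo --> 0)%E.
Proof.
have M0 := M_ge0.
apply: cvg_EFin.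
  by near=> m; apply: u_fin; near: m; exact: nbhs_infty_ge.
apply/cvgrPdist_le => e e0.
pose c := 4 * M / e + 1.
have c0 : 0 < c.
  have : 0 <= 4 * M / e by rewrite divr_ge0 ?mulr_ge0 // ltW.
  rewrite /c; lra.
pose eps := e / (2 * (1 + K) * c).
have eps0 : 0 < eps by rewrite /eps divr_gt0 // mulr_gt0 // mulr_gt0 //; lra.
move/cvgrPdist_le : hleb => /(_ eps eps0) hL.
case: hL => d /= d0 hd.
pose del := Num.min d Rr / 2.
have hmd : Num.min d Rr <= d by rewrite ge_min lexx.
have hmR : Num.min d Rr <= Rr by rewrite ge_min lexx orbT.
have hm0 : 0 < Num.min d Rr by rewrite lt_min d0 Rr0.
have del0 : 0 < del by rewrite /del; lra.
have deld : del < d by rewrite /del; lra.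
have delR : del < Rr by rewrite /del; lra.
pose pd := fine (pc del).
have pd0 : 0 < pd.
  by have := hsupp del del0; rewrite -(fineK (pc_fin del)) lte_fin.
near=> m.
have m1 : (1 <= m)%N by near: m; exact: nbhs_infty_ge.
have mgt : c / pd < m%:R by near: m; exact: nbhs_infty_gtr.
have mpos : 0 < (m%:R : R) by rewrite ltr0n.
pose t := c / m%:R.
have t0 : 0 < t by rewrite /t divr_gt0.
have tpd : t <= pd.
  rewrite /t ler_pdivrMr //; move: mgt; rewrite ltr_pdivrMr // => h.
  rewrite mulrC; exact: ltW.
have tpdE : (t%:E <= pc del)%E by rewrite -(fineK (pc_fin del)) lee_fin.
have [r [r0 rd tr ro]] := quantile t0 (ltW del0) tpdE.
have trf : t <= fine (pc r) by rewrite -lee_fin fineK ?pc_fin.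
have pr1 : fine (pc r) <= 1.
  rewrite -lee_fin fineK ?pc_fin //; apply: probability_le1; apply: mpre.
  exact: cball_meas.
have hb1 := real_bound r m1.
have ug0 : 0 <= fine (\int[P]_w (fx (NN m w))%:E)%E.
  by apply: fine_ge0; apply: integral_ge0 => w _; rewrite lee_fin.
rewrite /= sub0r normrN ger0_norm //.
apply: le_trans hb1 _.
have ha : (1 - fine (pc r)) ^+ m <= (1 - t) ^+ m.
  by apply: lerXn2r; rewrite ?nnegrE ?subr_ge0 //; lra.
have hbern := bern m (ltW t0) (le_trans trf pr1).
have mt : m%:R * t = c by rewrite /t; field; exact: lt0r_neq0.
rewrite mt in hbern.
have ec : e * c = 4 * M + e by rewrite /c; field; exact: lt0r_neq0.
set a' := (1 - t) ^+ m in ha hbern.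
set a := (1 - fine (pc r)) ^+ m in ha *.
have a'0 : 0 <= a' by rewrite /a' exprn_ge0 // subr_ge0; lra.
have h1 : 0 <= e * (1 - a' * (1 + c)) by rewrite mulr_ge0 ?subr_ge0 //; exact: ltW.
have h2 : 0 <= a' * e by rewrite mulr_ge0 // ltW.
have h3 : a' * (e * c) = a' * (4 * M + e) by rewrite ec.
have h4 : 2 * M * a <= 2 * M * a' by rewrite ler_wpM2l // mulr_ge0.
have term1 : 2 * M * a <= e / 2.
  apply: le_trans h4 _.
  have e1 : e * (1 - a' * (1 + c)) = e - a' * e - a' * (e * c) by ring.
  have e2 : a' * (4 * M + e) = 4 * (M * a') + a' * e by ring.
  have e3 : 2 * M * a' = 2 * (M * a') by ring.
  rewrite e3; move: h1 h2; rewrite e1 h3 e2.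
  set z := M * a'; set y := a' * e; lra.
set g := fine (\int[P]_w (hx r (Xs 0%N w))%:E)%E.
have g0 : 0 <= g by apply: fine_ge0; exact: G_ge0.
suff term2 : m%:R * g <= e / 2 by lra.
have [rz|rnz] := eqVneq r 0.
  have : g = 0 by rewrite /g rz G_zero.
  by move=> ->; rewrite mulr0; lra.
have rpos : 0 < r by rewrite lt_neqAle eq_sym rnz r0.
have hr : `|0 - g / fine (pc r)| <= eps.
  apply: hd => //; rewrite /ball_ /= sub0r normrN ger0_norm; lra.
have q0 : 0 < fine (pc r).
  by have := hsupp r rpos; rewrite -(fineK (pc_fin r)) lte_fin.
have hgq : g <= eps * fine (pc r).
  move: hr; rewrite sub0r normrN ger0_norm; last by rewrite divr_ge0 // ltW.
  by rewrite ler_pdivrMr.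
have hs := hK r (introT andP (conj rpos (le_lt_trans rd delR))).
have ofin : P (Xs 0%N @^-1` oball dist x r) \is a fin_num.
  by apply: pfin; apply: mpre; exact: oball_meas.
have sfin : P (Xs 0%N @^-1` sphere dist x r) \is a fin_num.
  apply: pfin; apply: mpre.
  have -> : sphere dist x r = cball dist x r `\` oball dist x r.
    apply/seteqP; split => y; rewrite /sphere /cball /oball /=.
      by move=> ->; split => //; rewrite ltxx.
    by move=> [h1' /negP]; rewrite -leNgt => h2'; apply/eqP; rewrite eq_le h1' h2'.
  apply: measurableD; [exact: cball_meas | exact: oball_meas].
move: hs; rewrite -(fineK ofin) -(fineK sfin) -EFinM lee_fin => hs.
have hot := ro rpos; move: hot; rewrite -(fineK ofin) lee_fin => hot.
have hsplit := pc_split r.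
set o := fine (P (Xs 0%N @^-1` oball dist x r)) in hs hot hsplit.
set s := fine (P (Xs 0%N @^-1` sphere dist x r)) in hs hsplit.
have hq : fine (pc r) <= (1 + K) * t.
  have : K * o <= K * t by rewrite ler_wpM2l.
  rewrite hsplit; lra.
have hg : g <= eps * ((1 + K) * t).
  apply: le_trans hgq _; rewrite ler_wpM2l //; exact: ltW.
have : m%:R * g <= m%:R * (eps * ((1 + K) * t)) by rewrite ler_wpM2l // ltW.
have -> : m%:R * (eps * ((1 + K) * t)) = e / 2.
  rewrite /eps /t; field.
  by rewrite !lt0r_neq0 //; lra.
by [].
Unshelve. all: by end_near.
Qed.

End main.

Unset Implicit Arguments.

(* X = Xs 0, X_i = Xs i for i >= 1 *)
Theorem mainTheorem8 (R : realType)
  (dO : measure_display) (Omega : measurableType dO) (P : probability Omega R)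
  (dT : measure_display) (T : measurableType dT) (dist : T -> T -> R)
  (Xs : nat -> Omega -> T) (eta : T -> R) (x : T)
  (NN : nat -> Omega -> T) :
  is_metric dist ->
  borel_of_metric dist ->
  (forall i, measurable_fun setT (Xs i)) ->
  mutually_independent_rv P Xs ->
  identically_distributed P Xs ->
  in_support P dist (Xs 0%N) x ->
  measurable_fun setT eta ->
  (exists M : R, forall y, `|eta y| <= M) ->
  (forall m, (1 <= m)%N -> is_nearest_neighbor dist Xs x m (NN m)) ->
  (exists K : R, exists2 Rr : R, 0 <= K /\ 0 < Rr &
     forall r, 0 < r < Rr ->
       (P (Xs 0%N @^-1` sphere dist x r) <= K%:E * P (Xs 0%N @^-1` oball dist x r))%E) ->
  lebesgue_point P dist (Xs 0%N) eta x ->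
  ((fun m => \int[P]_w (`|eta (NN m w) - eta x|)%:E) @ \oo --> 0)%E.
Proof.
move=> hm hb hXs hind hid hsupp heta [M hM] hNN [K [Rr [K0 Rr0] hK]] hleb.
exact: (main_sec hm hb hXs hind hid heta hM hNN hsupp K0 Rr0 hK hleb).
Qed.
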